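(* Let $I$ be a finite set, $T$ a tree on $I$, and fix a nice total order on $\mathcal{V}(T)$ with associated edge-labeling $\lambda$. For each $F \in [\hat{0},T]\setminus\{T\}$ there exists a unique $G\in[\hat{0},T]$ covering $F$ such that $\lambda(F,G) = \min(\mathcal{V}(T)\setminus\mathcal{V}(F))$.
   Context: A tree on a finite set $I$ is a (non-planar) rooted binary tree whose leaves are bijectively labeled by $I$: vertices are inner vertices (valence $3$) and leaves and the root (valence $1$), edges oriented towards the root; one-leaf trees are allowed. A forest on $I$ is a set of trees whose leaf sets partition $I$; $\mathcal{V}(F)$ is its set of inner vertices. For forests $F,G$ on $I$, $F \leq G$ if there is a continuous map $F\to G$ which (D1) is increasing with respect to orientation towards the root, (D2) maps inner vertices to inner vertices injectively, (D3) is the identity of $I$ on leaves, (D4) is injective on each tree of $F$. This gives the poset $\operatorname{For}(I)$, graded by the number of inner vertices, with minimum $\hat{0}$ (no inner vertices). For $F \leq G \leq T$ the inner vertices are regarded, via these maps, as subsets $\mathcal{V}(F)\subseteq\mathcal{V}(G)\subseteq\mathcal{V}(T)$; if $G$ covers $F$ there is a unique $v$ with $\mathcal{V}(G)=\mathcal{V}(F)\cup\{v\}$. Partial order on $\mathcal{V}(T)$: $v \preceq v'$ if $v'$ lies on the path between the root and $v$. A nice total order is any total order on $\mathcal{V}(T)$ extending $\preceq$; using it, the inner vertices are labeled $1,\dots,n$ increasingly and identified with their labels (min is taken in this order). The edge-labeling $\lambda$ is defined for $F\lhd G$ in $[\hat{0},T]$ by $\mathcal{V}(G)=\mathcal{V}(F)\cup\{\lambda(F,G)\}$.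 *)

(* Defs.v *)
From mathcomp Require Import all_boot.
Set Implicit Arguments. Unset Strict Implicit. Unset Printing Implicit Defensive.

(* Rooted binary trees with leaves labeled by I (planar representatives; the
   order of children plays no role since forests are only compared via the
   maps of (D1)-(D4)). *)
Inductive btree (I : Type) : Type :=
| Leaf of I
| Node of btree I & btree I.
Arguments Leaf {I}.
Arguments Node {I}.

Section Forests.
Variable I : finType.

Fixpoint leaves (t : btree I) : seq I :=
  match t with Leaf i => [:: i] | Node l r => leaves l ++ leaves r end.

Definition forest := seq (btree I).
Definition is_forest (F : forest) : Prop :=
  forall i : I, count_mem i (flatten (map leaves F)) = 1%N.

(* vertices of a forest: (index of the tree, position = path from its root;
   false = left child, true = right child) *)
Definition vtx := (nat * seq bool)%type.

Fixpoint subt (t : btree I) (p : seq bool) : option (btree I) :=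
  match p with
  | [::] => Some t
  | b :: p' => match t with
               | Leaf _ => None
               | Node l r => subt (if b then r else l) p'
               end
  end.

Definition subF (F : forest) (v : vtx) : option (btree I) :=
  obind (fun t => subt t v.2) (onth F v.1).

Definition is_inner (F : forest) (v : vtx) : bool :=
  if subF F v is Some (Node _ _) then true else false.

Definition child (v : vtx) (b : bool) : vtx := (v.1, rcons v.2 b).

Definition strict_below (u v : vtx) : Prop :=
  u.1 = v.1 /\ prefix v.2 u.2 /\ (size v.2 < size u.2)%N.

(* the vertex of G to which the child c of F is sent: psi c if c is inner,
   the leaf of G with the same label if c is a leaf (D3) *)
Definition target (F G : forest) (psi : vtx -> vtx) (c u : vtx) : Prop :=
  (is_inner F c /\ u = psi c) \/
  (exists i : I, subF F c = Some (Leaf i) /\ subF G u = Some (Leaf i)).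

(* combinatorial content of a continuous map F -> G satisfying (D1)-(D4):
   psi is its restriction to inner vertices. *)
Definition embeds (F G : forest) (psi : vtx -> vtx) : Prop :=
  (forall w, is_inner F w -> is_inner G (psi w)) /\
  (forall w w', is_inner F w -> is_inner F w' -> psi w = psi w' -> w = w') /\
  (* (D1) increasing: each edge is sent to an upward path *)
  (forall w b u, is_inner F w -> target F G psi (child w b) u ->
     strict_below u (psi w)) /\
  (* (D4) injectivity on each tree: the two children of w are sent into
     different branches below psi w *)
  (forall w u0 u1, is_inner F w ->
     target F G psi (child w false) u0 -> target F G psi (child w true) u1 ->
     nth false u0.2 (size (psi w).2) != nth false u1.2 (size (psi w).2)).

Definition fle (F G : forest) : Prop := exists psi, embeds F G psi.

Definition flt (F G : forest) : Prop := fle F G /\ ~ fle G F.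

Definition fcovers (F G : forest) : Prop :=
  flt F G /\
  ~ (exists H, is_forest H /\ flt F H /\ flt H G).

(* V(F), regarded as a set of inner vertices (positions) of the tree T via
   the map F -> T *)
Definition inV (T : btree I) (F : forest) (v : seq bool) : Prop :=
  exists psi, embeds F [:: T] psi /\
    exists w, is_inner F w /\ psi w = (0%N, v).

Definition innerT (T : btree I) (v : seq bool) : bool := is_inner [:: T] (0%N, v).

(* a nice total order on V(T): the list of the inner vertices of T labeled
   1..n increasingly, such that v comes before v' whenever v' lies strictly
   on the path between v and the root *)
Definition nice_order (T : btree I) (ord : seq (seq bool)) : Prop :=
  uniq ord /\ (forall v, (v \in ord) = innerT T v) /\
  (forall v v', v \in ord -> v' \in ord -> prefix v' v -> v != v' ->
     (index v ord < index v' ord)%N).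

End Forests.

(* Main.v *)
Require Import Defs.
From mathcomp Require Import all_boot.
From Stdlib Require Import Classical ClassicalEpsilon.
From mathcomp Require Import zify.
Set Implicit Arguments. Unset Strict Implicit. Unset Printing Implicit Defensive.

Section Gen.
Variable I : finType.
Implicit Types (t : btree I) (X Y Z : forest I) (w v u : vtx).

Lemma subt_cat t p q : subt t (p ++ q) = obind (fun s => subt s q) (subt t p).
Proof. by elim: p t => [|b p IH] [i|l r] //=. Qed.

Lemma subt0 t : subt t [::] = Some t.
Proof. by case: t. Qed.

Lemma subt_rcons t p b : subt t (rcons p b) =
  obind (fun s => match s with Leaf _ => None | Node l r => Some (if b then r else l) end) (subt t p).
Proof.
rewrite -cats1 subt_cat; case: (subt t p) => [[i|l r]|] //=; by case: b; rewrite subt0.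
Qed.

Lemma subF_child X w b : subF X (child w b) =
  obind (fun s => match s with Leaf _ => None | Node l r => Some (if b then r else l) end) (subF X w).
Proof. rewrite /subF /child /=; case: (onth X w.1) => //= t; exact: subt_rcons. Qed.

Lemma is_innerP X w : reflect (exists l r, subF X w = Some (Node l r)) (is_inner X w).
Proof.
rewrite /is_inner; case: (subF X w) => [[i|l r]|]; constructor; try by case=> ? [].
by exists l, r.
Qed.

Lemma child_inner X w b s : subF X (child w b) = Some s -> is_inner X w.
Proof. by rewrite subF_child /is_inner; case: (subF X w) => [[]|]. Qed.

Lemma inner_child X w b : is_inner X w -> exists s, subF X (child w b) = Some s.
Proof. by move/is_innerP=> [l [r E]]; rewrite subF_child E /=; eexists. Qed.

Lemma child_inj w w' b b' : child w b = child w' b' -> w = w' /\ b = b'.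
Proof.
case: w w' => [j p] [j' p'] [-> /rcons_inj [-> ->]]; by [].
Qed.

Lemma subt_leaf_below t p s : subt t p = Some s -> exists r i, subt t (p ++ r) = Some (Leaf i).
Proof.
move=> E; elim: s p E => [i|l IHl r _] p E; first by exists [::], i; rewrite cats0.
have E' : subt t (rcons p false) = Some l by rewrite subt_rcons E.
have [r' [i Hi]] := IHl _ E'; exists (false :: r'), i; by rewrite -cat_rcons.
Qed.

Lemma leaves_subt t p i : subt t p = Some (Leaf i) -> 0 < count_mem i (leaves t).
Proof.
elim: t p => [j|l IHl r IHr] [|b p] //=; first by case=> ->; rewrite eqxx.
by case: b => /= H; rewrite count_cat addn_gt0; [rewrite (IHr _ H) orbT | rewrite (IHl _ H)].
Qed.

Lemma leaves_subt2 t p p' i : subt t p = Some (Leaf i) -> subt t p' = Some (Leaf i) ->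
  p != p' -> 1 < count_mem i (leaves t).
Proof.
elim: t p p' => [j|l IHl r IHr] [|b p] [|b' p'] //=.
rewrite eqseq_cons count_cat; case: b; case: b' => /= H H'.
- by move/(IHr _ _ H H') => H2; exact: leq_trans H2 (leq_addl _ _).
- by move=> _; exact: (leq_add (leaves_subt H') (leaves_subt H)).
- by move=> _; exact: (leq_add (leaves_subt H) (leaves_subt H')).
- by move/(IHl _ _ H H') => H2; exact: leq_trans H2 (leq_addr _ _).
Qed.

Lemma in_leaves_subt t i : i \in leaves t -> exists p, subt t p = Some (Leaf i).
Proof.
elim: t => [j|l IHl r IHr] /=; first by rewrite inE => /eqP ->; exists [::].
rewrite mem_cat => /orP [/IHl [p Hp]|/IHr [p Hp]]; [exists (false :: p)|exists (true :: p)]; by [].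
Qed.

Lemma in_forest_leaf X i : i \in flatten (map (@leaves I) X) -> exists w, subF X w = Some (Leaf i).
Proof.
elim: X => [|t X IH] //=; rewrite mem_cat => /orP [/in_leaves_subt [p Hp]|/IH [[j p] Hw]].
  by exists (0, p).
by exists (j.+1, p).
Qed.

Lemma forest_leaf_exists X i : is_forest X -> exists w, subF X w = Some (Leaf i).
Proof. move=> /(_ i) H; apply: in_forest_leaf; by rewrite -has_pred1 has_count H. Qed.

Lemma leaf_in_forest X w i : subF X w = Some (Leaf i) -> 0 < count_mem i (flatten (map (@leaves I) X)).
Proof.
case: w => j p; elim: X j => [|t X IH] [|j] //=; rewrite count_cat addn_gt0.
  by rewrite /subF /= => /leaves_subt ->.
by move=> H; rewrite (IH j H) orbT.
Qed.

Lemma leaf_two X w w' i : w != w' -> subF X w = Some (Leaf i) -> subF X w' = Some (Leaf i) ->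
  1 < count_mem i (flatten (map (@leaves I) X)).
Proof.
case: w w' => j p [j' p']; elim: X j j' => [|t X IH] [|j] [|j'] //=;
  rewrite /subF /= count_cat => Hne.
- rewrite xpair_eqE eqxx /= in Hne => H H'; move: (leaves_subt2 H H' Hne) => H2.
  exact: leq_trans H2 (leq_addr _ _).
- move=> H H'; exact: (leq_add (leaves_subt H) (@leaf_in_forest X (j', p') i H')).
- move=> H H'; exact: (leq_add (leaves_subt H') (@leaf_in_forest X (j, p) i H)).
- rewrite xpair_eqE eqSS in Hne => H H'.
  have := IH j j'; rewrite xpair_eqE Hne => /(_ isT H H') H2.
  exact: leq_trans H2 (leq_addl _ _).
Qed.

Lemma leaf_uniq X w w' i : is_forest X -> subF X w = Some (Leaf i) -> subF X w' = Some (Leaf i) -> w = w'.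
Proof.
move=> /(_ i) /eqP HX Hw Hw'; apply/eqP; apply: contraTT HX => Hne.
by rewrite neq_ltn (leaf_two Hne Hw Hw') orbT.
Qed.

Lemma prefix_split (p q : seq bool) : prefix p q -> size p < size q ->
  q = p ++ nth false q (size p) :: drop (size p).+1 q.
Proof.
move=> /prefixP [[|x s] ->]; first by rewrite cats0 ltnn.
by rewrite nth_cat ltnn subnn /= -add1n -drop_drop drop_size_cat //= drop0.
Qed.

Lemma prefix_nth (a c : seq bool) n : prefix a c -> n < size a -> nth false c n = nth false a n.
Proof. by move=> /prefixP [s ->] Hn; rewrite nth_cat Hn. Qed.

Lemma prefix_total (a b c : seq bool) : prefix a c -> prefix b c -> prefix a b \/ prefix b a.
Proof.
rewrite !prefixE => /eqP Ha /eqP Hb; case: (leqP (size a) (size b)) => H.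
  by left; rewrite -{1}Hb -take_min (minn_idPl H) Ha.
by right; rewrite -{1}Ha -take_min (minn_idPl (ltnW H)) Hb.
Qed.

Lemma prefix_antisym (a b : seq bool) : prefix a b -> prefix b a -> a = b.
Proof.
move=> Hab Hba; have H2 := size_prefix Hba; move/prefixP: Hab H2 => [s ->].
by rewrite size_cat -{2}(addn0 (size a)) leq_add2l leqn0 => /nilP ->; rewrite cats0.
Qed.


Lemma target_ex X Y psi c u : target X Y psi c u -> exists s, subF X c = Some s.
Proof. case=> [[/is_innerP [l [r ->]] _]|[i [-> _]]]; by eexists. Qed.

Lemma sb_split v y : strict_below v y ->
  v = (y.1, y.2 ++ nth false v.2 (size y.2) :: drop (size y.2).+1 v.2).
Proof. case: v y => [j p] [j' q] [/= -> [Hp Hs]]; by rewrite -(prefix_split Hp Hs). Qed.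

Lemma embed_mono X Y b y g r u :
  embeds X Y b -> is_inner X y -> target X Y b (y.1, y.2 ++ g :: r) u ->
  exists u', target X Y b (child y g) u' /\ u.1 = u'.1 /\ prefix u'.2 u.2.
Proof.
move=> [_ [_ [D1 _]]] Hy; elim/last_ind: r u => [|r d IH] u.
  move=> Ht; exists u; split; [by rewrite /child -cats1 | split=> //; exact: prefix_refl].
rewrite -rcons_cons -rcons_cat => Ht.
have Hv0 : is_inner X (y.1, y.2 ++ g :: r).
  have [s Hs] := target_ex Ht; exact: (@child_inner X (y.1, y.2 ++ g :: r) d s Hs).
have [E1 [E2 _]] := D1 _ d _ Hv0 Ht.
have [u' [H1 [H2 H3]]] := IH _ (or_introl (conj Hv0 erefl)).
exists u'; split=> //; split; first by rewrite E1.
exact: prefix_trans H3 E2.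
Qed.

Lemma comp_target X Y Z a b c u : is_forest Y -> embeds X Y a ->
  target X Z (fun w => b (a w)) c u -> exists v, target X Y a c v /\ target Y Z b v u.
Proof.
move=> HY [A2 _] [[Hc ->]|[i [Hc Hu]]].
  by exists (a c); split; left; split=> //; apply: A2.
have [v Hv] := forest_leaf_exists i HY.
by exists v; split; right; exists i.
Qed.

Lemma comp_embeds X Y Z a b : is_forest Y -> embeds X Y a -> embeds Y Z b ->
  embeds X Z (fun w => b (a w)).
Proof.
move=> HY Ha Hb; have Ha' := Ha; have Hb' := Hb.
case: Ha' => [A2 [A2i [A1 A4]]]; case: Hb' => [B2 [B2i [B1 B4]]].
have key : forall w g u, is_inner X w -> target X Z (fun w => b (a w)) (child w g) u ->
  exists v u', target X Y a (child w g) v /\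
   target Y Z b (child (a w) (nth false v.2 (size (a w).2))) u' /\
   strict_below u' (b (a w)) /\ u.1 = u'.1 /\ prefix u'.2 u.2.
  move=> w g u Hw Ht; have [v [Hv1 Hv2]] := comp_target HY Ha Ht.
  have Hsb := A1 _ _ _ Hw Hv1; rewrite (sb_split Hsb) in Hv2.
  have [u' [H1 H2]] := embed_mono Hb (A2 _ Hw) Hv2.
  exists v, u'; split=> //; split=> //; split=> //; exact: B1 _ _ _ (A2 _ Hw) H1.
split; [|split; [|split]].
- by move=> w Hw; apply: B2; apply: A2.
- by move=> w w' Hw Hw' /B2i E; apply: A2i => //; apply: E; apply: A2.
- move=> w g u Hw Ht; have [v [u' [_ [_ [[E1 [E2 E3]] [E4 E5]]]]]] := key _ _ _ Hw Ht.
  split; first by rewrite E4.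
  split; first exact: prefix_trans E2 E5.
  exact: leq_trans E3 (size_prefix E5).
- move=> w u0 u1 Hw Ht0 Ht1.
  have [v0 [u0' [Hv0 [Hu0' [[F1 [F2 F3]] [F4 F5]]]]]] := key _ _ _ Hw Ht0.
  have [v1 [u1' [Hv1 [Hu1' [[G1 [G2 G3]] [G4 G5]]]]]] := key _ _ _ Hw Ht1.
  have Hd := A4 _ _ _ Hw Hv0 Hv1.
  rewrite (prefix_nth F5 F3) (prefix_nth G5 G3).
  move: Hd Hu0' Hu1'; case: (nth false v0.2 _); case: (nth false v1.2 _) => //= _ H0 H1.
  + by have := B4 _ _ _ (A2 _ Hw) H1 H0; rewrite eq_sym.
  + exact: B4 _ _ _ (A2 _ Hw) H0 H1.
Qed.

Lemma fle_trans X Y Z : is_forest Y -> fle X Y -> fle Y Z -> fle X Z.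
Proof. move=> HY [a Ha] [b Hb]; exists (fun w => b (a w)); exact: comp_embeds. Qed.

End Gen.


Section WithT.
Variable I : finType.
Variable T : btree I.
Hypothesis HT : is_forest [:: T].
Implicit Types (t : btree I) (X Y Z : forest I) (w v u : vtx).

Fixpoint findleaf t (i : I) : option (seq bool) :=
  match t with
  | Leaf j => if j == i then Some [::] else None
  | Node l r => match findleaf l i with
                | Some p => Some (false :: p)
                | None => omap (cons true) (findleaf r i) end
  end.

Lemma findleafP t i p : findleaf t i = Some p -> subt t p = Some (Leaf i).
Proof.
elim: t p => [j|l IHl r IHr] p /=; first by case: eqP => // -> [<-].
case E: (findleaf l i) => [q|]; first by case=> <- /=; apply: IHl.
by case E': (findleaf r i) => [q|] //= [<-] /=; apply: IHr.
Qed.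

Lemma findleaf_ex t i : i \in leaves t -> exists p, findleaf t i = Some p.
Proof.
elim: t => [j|l IHl r IHr] /=; first by rewrite inE => /eqP ->; rewrite eqxx; eexists.
rewrite mem_cat => /orP [/IHl [p ->]|/IHr [p ->]]; first by eexists.
by case: (findleaf l i); eexists.
Qed.

Definition lpos i := odflt [::] (findleaf T i).

Lemma HTc i : count_mem i (leaves T) = 1.
Proof. by have := HT i; rewrite /= cats0. Qed.

Lemma lposP i : subt T (lpos i) = Some (Leaf i).
Proof.
have : i \in leaves T by rewrite -has_pred1 has_count HTc.
by move/findleaf_ex => [p Hp]; rewrite /lpos Hp /=; apply: findleafP.
Qed.

Lemma lpos_uniq q i : subt T q = Some (Leaf i) -> q = lpos i.
Proof.
move=> Hq; apply/eqP; have /eqP := HTc i; apply: contraTT => Hne.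
by rewrite neq_ltn (@leaves_subt2 _ T q (lpos i) i Hq (lposP i) Hne) orbT.
Qed.


Definition leafT q := exists i, subt T q = Some (Leaf i).

Lemma inner_T0 v : is_inner [:: T] v -> v = (0%N, v.2).
Proof. case: v => [[|j] q] //; by rewrite /is_inner /subF /= onth0n. Qed.

Lemma subFT q : subF [:: T] (0%N, q) = subt T q.
Proof. by []. Qed.

Lemma leafT_subF u i : subF [:: T] u = Some (Leaf i) -> u = (0%N, lpos i).
Proof. case: u => [[|j] q] H; first by rewrite -(lpos_uniq H). by move: H; rewrite /subF /= onth0n. Qed.

Lemma innerT_leaf q i : innerT T q -> subt T q = Some (Leaf i) -> False.
Proof. move=> H1 H2; move: H1; by rewrite /innerT /is_inner subFT H2. Qed.

Lemma lpos_inj i j : lpos i = lpos j -> i = j.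
Proof. by move=> E; have := lposP i; rewrite E lposP => -[]. Qed.

Definition timg X (chi : vtx -> vtx) w :=
  if is_inner X w then (chi w).2 else if subF X w is Some (Leaf i) then lpos i else [::].

Lemma timg_leaf X chi w i : subF X w = Some (Leaf i) -> timg X chi w = lpos i.
Proof. by move=> H; rewrite /timg /is_inner H. Qed.

Lemma timg_in X chi w : is_inner X w -> timg X chi w = (chi w).2.
Proof. by rewrite /timg => ->. Qed.

Lemma target_T X chi v u : embeds X [:: T] chi -> target X [:: T] chi v u -> u = (0%N, timg X chi v).
Proof.
move=> [D2 _] [[Hv ->]|[i [Hv Hu]]]; first by rewrite timg_in //; exact: inner_T0 (D2 _ Hv).
by rewrite (timg_leaf _ Hv); exact: leafT_subF.
Qed.

Lemma target_T_ex X chi v s : embeds X [:: T] chi -> subF X v = Some s ->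
  target X [:: T] chi v (0%N, timg X chi v).
Proof.
move=> [D2 _]; case: s => [i|l r] Hv.
  by right; exists i; split=> //; rewrite (timg_leaf _ Hv) subFT lposP.
have Hi : is_inner X v by rewrite /is_inner Hv.
by left; split=> //; rewrite timg_in //; exact: esym (inner_T0 (D2 _ Hi)).
Qed.

Lemma timg_innerT X chi w : embeds X [:: T] chi -> is_inner X w -> innerT T (timg X chi w).
Proof.
move=> [D2 _] Hw; rewrite timg_in //; have E := inner_T0 (D2 _ Hw); have := D2 _ Hw; rewrite {1}E; exact: id.
Qed.

Lemma chi_eq X chi w w' : embeds X [:: T] chi -> is_inner X w -> is_inner X w' ->
  (chi w).2 = (chi w').2 -> w = w'.
Proof.
move=> [D2 [D2i _]] Hw Hw' E; apply: D2i => //.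
by rewrite (inner_T0 (D2 _ Hw)) (inner_T0 (D2 _ Hw')) E.
Qed.

Lemma timg_inj X chi w w' s s' : is_forest X -> embeds X [:: T] chi ->
  subF X w = Some s -> subF X w' = Some s' -> timg X chi w = timg X chi w' -> w = w'.
Proof.
move=> HX HE; case: s => [i|l r] Hw; case: s' => [i'|l' r'] Hw'.
- rewrite (timg_leaf _ Hw) (timg_leaf _ Hw') => /lpos_inj E; rewrite E in Hw.
  exact: leaf_uniq HX Hw Hw'.
- have Hi : is_inner X w' by rewrite /is_inner Hw'.
  move=> E; have := timg_innerT HE Hi; rewrite -E (timg_leaf _ Hw) => /innerT_leaf.
  by move/(_ _ (lposP i)).
- have Hi : is_inner X w by rewrite /is_inner Hw.
  move=> E; have := timg_innerT HE Hi; rewrite E (timg_leaf _ Hw') => /innerT_leaf.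
  by move/(_ _ (lposP i')).
- have Hi : is_inner X w by rewrite /is_inner Hw.
  have Hi' : is_inner X w' by rewrite /is_inner Hw'.
  rewrite (timg_in _ Hi) (timg_in _ Hi'); exact: (chi_eq HE Hi Hi').
Qed.

Definition sb (z p : seq bool) := prefix p z && (size p < size z).

Lemma rcons_prefixP p b z : prefix (rcons p b) z <-> (sb z p /\ nth false z (size p) = b).
Proof.
split.
  move=> H; have Hp : prefix p z := prefix_trans (prefix_rcons p b) H.
  have Hs := size_prefix H; rewrite size_rcons in Hs.
  by rewrite /sb Hp Hs (prefix_nth H) ?size_rcons // nth_rcons ltnn eqxx.
move=> [/andP [Hp Hs] Hb]; rewrite (prefix_split Hp Hs) Hb -cat_rcons; exact: prefix_prefix.
Qed.

Lemma sb_trans a b c : sb a b -> sb b c -> sb a c.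
Proof.
move=> /andP [H1 H2] /andP [H3 H4]; rewrite /sb (prefix_trans H3 H1) /=.
exact: ltn_trans H4 (leq_trans H2 (leqnn _)).
Qed.

Lemma strict_below_T z p : strict_below (0%N, z) (0%N, p) <-> sb z p.
Proof. by rewrite /strict_below /sb /=; split=> [[_ [-> ->]]|/andP [-> ->]]. Qed.

Lemma emb_child X chi w g : embeds X [:: T] chi -> is_inner X w ->
  sb (timg X chi (child w g)) (timg X chi w).
Proof.
move=> HE Hw; have [s Hs] := inner_child g Hw.
have Ht := target_T_ex HE Hs; have [_ [_ [D1 _]]] := HE.
have := D1 _ _ _ Hw Ht; rewrite (timg_in _ Hw) {1}(inner_T0 (proj1 HE _ Hw)).
by move/strict_below_T.
Qed.

Definition sbit X chi w g := nth false (timg X chi (child w g)) (size (timg X chi w)).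

Lemma emb_sides X chi w : embeds X [:: T] chi -> is_inner X w -> sbit X chi w false != sbit X chi w true.
Proof.
move=> HE Hw; have [s0 Hs0] := inner_child false Hw; have [s1 Hs1] := inner_child true Hw.
have [D2 [_ [_ D4]]] := HE.
by have := D4 _ _ _ Hw (target_T_ex HE Hs0) (target_T_ex HE Hs1); rewrite /sbit (timg_in _ Hw).
Qed.

Lemma emb_below X chi y g r s : embeds X [:: T] chi -> is_inner X y ->
  subF X (y.1, y.2 ++ g :: r) = Some s ->
  prefix (timg X chi (child y g)) (timg X chi (y.1, y.2 ++ g :: r)).
Proof.
move=> HE Hy Hs; have Ht := target_T_ex HE Hs.
have [u' [H1 [_ H3]]] := embed_mono HE Hy Ht.
by rewrite (target_T HE H1) in H3.
Qed.

Lemma emb_side X chi y g r s : embeds X [:: T] chi -> is_inner X y ->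
  subF X (y.1, y.2 ++ g :: r) = Some s ->
  prefix (rcons (timg X chi y) (sbit X chi y g)) (timg X chi (y.1, y.2 ++ g :: r)).
Proof.
move=> HE Hy Hs; have Hp := emb_below HE Hy Hs; have Hc := emb_child g HE Hy.
apply/rcons_prefixP; split.
  case/andP: Hc => H1 H2; rewrite /sb (prefix_trans H1 Hp) /=.
  exact: leq_trans H2 (size_prefix Hp).
by case/andP: Hc => _ H2; rewrite (prefix_nth Hp H2).
Qed.


Definition cS X chi q := exists w, is_inner X w /\ timg X chi w = q.
Definition cE X chi z p := exists w g, [/\ is_inner X w, timg X chi (child w g) = z & timg X chi w = p].

Definition node (S : seq bool -> Prop) q := S q \/ leafT q.

Definition cfg_ok (S : seq bool -> Prop) (E : seq bool -> seq bool -> Prop) :=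
  [/\ (forall p, S p -> innerT T p),
      (forall z p, E z p -> [/\ S p, sb z p & node S z]),
      (forall z p p', E z p -> E z p' -> p = p'),
      (forall p b, S p -> exists z, E z p /\ prefix (rcons p b) z) &
      (forall z z' p b, E z p -> E z' p -> prefix (rcons p b) z -> prefix (rcons p b) z' -> z = z')].

Lemma sbit_nth X chi w g : embeds X [:: T] chi -> is_inner X w ->
  prefix (rcons (timg X chi w) (sbit X chi w g)) (timg X chi (child w g)).
Proof. by move=> HE Hw; apply/rcons_prefixP; split; [exact: emb_child|]. Qed.

Lemma cfg_forest X chi : is_forest X -> embeds X [:: T] chi -> cfg_ok (cS X chi) (cE X chi).
Proof.
move=> HX HE; split.
- by move=> p [w [Hw <-]]; exact: timg_innerT.
- move=> z p [w [g [Hw <- <-]]]; split; first by exists w.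
  + exact: emb_child.
  + have [s Hs] := inner_child g Hw; case: s Hs => [i|l r] Hs.
      by right; exists i; rewrite (timg_leaf _ Hs) lposP.
    by left; exists (child w g); split=> //; rewrite /is_inner Hs.
- move=> z p p' [w [g [Hw Ez Ep]]] [w' [g' [Hw' Ez' Ep']]].
  have [s Hs] := inner_child g Hw; have [s' Hs'] := inner_child g' Hw'.
  have := timg_inj HX HE Hs Hs' (etrans Ez (esym Ez')).
  by case/child_inj => E _; rewrite -Ep -Ep' E.
- move=> p b [w [Hw <-]]; have Hd := emb_sides HE Hw.
  case: (boolP (sbit X chi w false == b)) => Hb.
    exists (timg X chi (child w false)); split; first by exists w, false.
    by rewrite -(eqP Hb); exact: sbit_nth.
  exists (timg X chi (child w true)); split; first by exists w, true.
  suff <- : sbit X chi w true = b by exact: sbit_nth.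
  by move: Hd Hb; case: (sbit _ _ _ false); case: (sbit _ _ _ true); case: b.
- move=> z z' p b [w [g [Hw Ez Ep]]] [w' [g' [Hw' Ez' Ep']]] Hz Hz'.
  have Eww : w = w'.
    by apply: (chi_eq HE Hw Hw'); rewrite -(timg_in _ Hw) -(timg_in _ Hw') Ep Ep'.
  subst w'; case: (eqVneq g g') => [Eg|Hg]; first by rewrite -Ez -Ez' Eg.
  have := emb_sides HE Hw; move: Hz Hz'; rewrite -Ez -Ez' -Ep => /rcons_prefixP [_ H1] /rcons_prefixP [_ H2].
  have Hs : sbit X chi w g = sbit X chi w g' by rewrite /sbit H1 H2.
  by move: Hg Hs; clear; case: g; case: g' => //= _ ->; rewrite eqxx.
Qed.

Lemma subF_leaf_below X v s : subF X v = Some s -> exists r i, subF X (v.1, v.2 ++ r) = Some (Leaf i).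
Proof.
rewrite /subF; case: (onth X v.1) => //= t H; have [r [i Hi]] := subt_leaf_below H.
by exists r, i.
Qed.

Lemma lcp_aux (q q' a c : seq bool) (b0 b1 : bool) : prefix (rcons q b0) a -> prefix (rcons q b1) c -> b0 != b1 ->
  prefix q' a -> prefix q' c -> prefix q q' -> q = q'.
Proof.
move=> /rcons_prefixP [/andP [_ Ha] Ha'] /rcons_prefixP [/andP [_ Hc] Hc'] Hb Hqa Hqc Hqq.
case: (ltnP (size q) (size q')) => Hs.
  by move: Hb; rewrite -Ha' -Hc' (prefix_nth Hqa Hs) (prefix_nth Hqc Hs) eqxx.
move: Hqq; rewrite prefixE => /eqP <-; rewrite take_oversize //.
Qed.

Lemma lcp_uniq (q q' a c : seq bool) (b0 b1 b0' b1' : bool) : prefix (rcons q b0) a -> prefix (rcons q b1) c -> b0 != b1 ->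
  prefix (rcons q' b0') a -> prefix (rcons q' b1') c -> b0' != b1' -> q = q'.
Proof.
move=> H1 H2 H3 H4 H5 H6.
have Pa := prefix_trans (prefix_rcons q b0) H1; have Pa' := prefix_trans (prefix_rcons q' b0') H4.
have Pc := prefix_trans (prefix_rcons q b1) H2; have Pc' := prefix_trans (prefix_rcons q' b1') H5.
case: (prefix_total Pa Pa') => H; first exact: lcp_aux H1 H2 H3 Pa' Pc' H.
exact: esym (lcp_aux H4 H5 H6 Pa Pc H).
Qed.

Lemma emb_uniq X chi chi' w : embeds X [:: T] chi -> embeds X [:: T] chi' -> is_inner X w ->
  chi w = chi' w.
Proof.
move=> HE HE' Hw.
have L : forall g, exists r i, subF X (w.1, w.2 ++ g :: r) = Some (Leaf i).
  move=> g; have [s Hs] := inner_child g Hw; have [r [i Hi]] := subF_leaf_below Hs.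
  by exists r, i; rewrite -cat_rcons.
have [r0 [i0 H0]] := L false; have [r1 [i1 H1]] := L true.
have E : timg X chi w = timg X chi' w.
  have := emb_side HE Hw H0; have := emb_side HE Hw H1.
  have := emb_side HE' Hw H0; have := emb_side HE' Hw H1.
  rewrite !(timg_leaf _ H0) !(timg_leaf _ H1) => A1 A0 B1 B0.
  exact: lcp_uniq B0 B1 (emb_sides HE Hw) A0 A1 (emb_sides HE' Hw).
move: E; rewrite (timg_in _ Hw) (timg_in _ Hw) => E.
by rewrite (inner_T0 (proj1 HE _ Hw)) (inner_T0 (proj1 HE' _ Hw)) E.
Qed.

Lemma inV_cS X chi (q : seq bool) : embeds X [:: T] chi -> (inV T X q <-> cS X chi q).
Proof.
move=> HE; split.
  move=> [psi [Hp [w [Hw Hpw]]]]; exists w; split=> //.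
  by rewrite (timg_in _ Hw) (emb_uniq HE Hp Hw) Hpw.
move=> [w [Hw <-]]; exists chi; split=> //; exists w; split=> //.
by rewrite (timg_in _ Hw); exact: inner_T0 (proj1 HE _ Hw).
Qed.


Inductive anc (E : seq bool -> seq bool -> Prop) (p : seq bool) : seq bool -> Prop :=
| anc1 z : E z p -> anc E p z
| ancS z q : E z q -> anc E p q -> anc E p z.

Lemma inner_ex X w : is_inner X w -> exists s, subF X w = Some s.
Proof. by move/is_innerP => [l [r ->]]; eexists. Qed.

Lemma ancV' Y chi y g r s : embeds Y [:: T] chi -> is_inner Y y ->
  subF Y (y.1, y.2 ++ g :: r) = Some s ->
  anc (cE Y chi) (timg Y chi y) (timg Y chi (y.1, y.2 ++ g :: r)).
Proof.
move=> HE Hy; elim/last_ind: r s => [|r d IH] s.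
  by rewrite cats1 => _; apply: anc1; exists y, g.
rewrite -rcons_cons -rcons_cat => Hs.
have Hv0 : is_inner Y (y.1, y.2 ++ g :: r) := @child_inner _ Y (y.1, y.2 ++ g :: r) d s Hs.
have [s0 Hs0] := inner_ex Hv0.
apply: (ancS _ (IH _ Hs0)); by exists (y.1, y.2 ++ g :: r), d.
Qed.

Lemma sb_child w g : strict_below (child w g) w.
Proof. by rewrite /strict_below /= prefix_rcons size_rcons ltnSn. Qed.

Lemma strict_below_trans u v w : strict_below u v -> strict_below v w -> strict_below u w.
Proof.
move=> [E1 [P1 S1]] [E2 [P2 S2]]; split; first by rewrite E1.
split; [exact: prefix_trans P2 P1 | exact: ltn_trans S2 S1].
Qed.

Lemma ancV Y chi p z : is_forest Y -> embeds Y [:: T] chi -> anc (cE Y chi) p z ->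
  forall y u s, is_inner Y y -> timg Y chi y = p -> subF Y u = Some s -> timg Y chi u = z ->
  strict_below u y.
Proof.
move=> HY HE; elim=> [z' [w [g [Hw Ez Ep]]]|z' q [w [g [Hw Ez Eq]]] _ IH] y u s Hy Hyp Hu Huz.
- have Ewy : w = y by apply: (chi_eq HE Hw Hy); rewrite -(timg_in _ Hw) -(timg_in _ Hy) Ep Hyp.
  subst w; have [s' Hs'] := inner_child g Hy.
  rewrite (timg_inj HY HE Hu Hs' (etrans Huz (esym Ez))); exact: sb_child.
- have [sw Hsw] := inner_ex Hw; have H1 := IH y w sw Hy Hyp Hsw Eq.
  have [s' Hs'] := inner_child g Hw.
  rewrite (timg_inj HY HE Hu Hs' (etrans Huz (esym Ez))).
  exact: strict_below_trans (sb_child w g) H1.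
Qed.

Lemma fle_cfg X Y a chiX chiY : is_forest X -> is_forest Y -> embeds X Y a ->
  embeds X [:: T] chiX -> embeds Y [:: T] chiY ->
  (forall q, cS X chiX q -> cS Y chiY q) /\ (forall z p, cE X chiX z p -> anc (cE Y chiY) p z).
Proof.
move=> HX HY Ha HEX HEY; have HC := comp_embeds HY Ha HEY.
have [A2 [_ [A1 _]]] := Ha.
have Eq : forall w, is_inner X w -> timg X chiX w = timg Y chiY (a w).
  by move=> w Hw; rewrite (timg_in _ Hw) (timg_in _ (A2 _ Hw)) (emb_uniq HEX HC Hw).
split; first by move=> q [w [Hw <-]]; exists (a w); split; [exact: A2 | rewrite Eq].
move=> z p [w [g [Hw <- <-]]].
have [v [sv [Hv1 Hv2 Hv3]]] : exists v sv, [/\ target X Y a (child w g) v, subF Y v = Some sv &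
     timg Y chiY v = timg X chiX (child w g)].
  have [s Hs] := inner_child g Hw; case: s Hs => [i|l r] Hs.
    have [v Hv] := forest_leaf_exists i HY; exists v, (Leaf i); split=> //.
      by right; exists i.
    by rewrite (timg_leaf _ Hv) (timg_leaf _ Hs).
  have Hc : is_inner X (child w g) by rewrite /is_inner Hs.
  have [sv Hsv] := inner_ex (A2 _ Hc); exists (a (child w g)), sv; split=> //.
    by left.
  by rewrite Eq.
have Hsb := A1 _ _ _ Hw Hv1; rewrite (sb_split Hsb) in Hv2.
have := ancV' HEY (A2 _ Hw) Hv2; by rewrite -(sb_split Hsb) Hv3 -Eq.
Qed.

Lemma cfg_fle X Y chiX chiY : is_forest X -> is_forest Y ->
  embeds X [:: T] chiX -> embeds Y [:: T] chiY ->
  (forall q, cS X chiX q -> cS Y chiY q) -> (forall z p, cE X chiX z p -> anc (cE Y chiY) p z) ->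
  fle X Y.
Proof.
move=> HX HY HEX HEY HS HE.
have Hpsi : forall w, exists y, is_inner X w -> is_inner Y y /\ timg Y chiY y = timg X chiX w.
  move=> w; case: (boolP (is_inner X w)) => Hw; last by exists w.
  have [y [Hy E]] := HS _ (ex_intro _ w (conj Hw erefl)); by exists y.
pose psi w := proj1_sig (constructive_indefinite_description _ (Hpsi w)).
have Hp : forall w, is_inner X w -> is_inner Y (psi w) /\ timg Y chiY (psi w) = timg X chiX w.
  move=> w; exact: (proj2_sig (constructive_indefinite_description _ (Hpsi w))).
have key : forall w g u, is_inner X w -> target X Y psi (child w g) u ->
    exists su, subF Y u = Some su /\ timg Y chiY u = timg X chiX (child w g).
  move=> w g u Hw [[Hc ->]|[i [Hc Hu]]].
    have [Hi E] := Hp _ Hc; have [su Hsu] := inner_ex Hi; by exists su.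
  by exists (Leaf i); rewrite (timg_leaf _ Hu) (timg_leaf _ Hc).
have D1 : forall w g u, is_inner X w -> target X Y psi (child w g) u -> strict_below u (psi w).
  move=> w g u Hw Ht; have [su [Hsu Eu]] := key _ _ _ Hw Ht.
  have [Hi Ei] := Hp _ Hw.
  exact: (ancV HY HEY (HE _ _ (ex_intro _ w (ex_intro _ g (And3 Hw erefl erefl)))) Hi Ei Hsu Eu).
exists psi; split; [|split; [|split]].
- by move=> w /Hp [].
- move=> w w' Hw Hw' E; have [_ E1] := Hp _ Hw; have [_ E2] := Hp _ Hw'.
  have [sw Hsw] := inner_ex Hw; have [sw' Hsw'] := inner_ex Hw'.
  by apply: (timg_inj HX HEX Hsw Hsw'); rewrite -E1 -E2 E.
- exact: D1.
- move=> w u0 u1 Hw Ht0 Ht1.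
  have S0 := D1 _ _ _ Hw Ht0; have S1 := D1 _ _ _ Hw Ht1.
  have [s0 [Hs0 E0]] := key _ _ _ Hw Ht0; have [s1 [Hs1 E1]] := key _ _ _ Hw Ht1.
  have [Hi Ei] := Hp _ Hw.
  rewrite (sb_split S0) in Hs0; rewrite (sb_split S1) in Hs1.
  have P0 := emb_side HEY Hi Hs0; have P1 := emb_side HEY Hi Hs1.
  rewrite -(sb_split S0) E0 Ei in P0; rewrite -(sb_split S1) E1 Ei in P1.
  have Q0 := sbit_nth false HEX Hw; have Q1 := sbit_nth true HEX Hw.
  move: P0 P1 => /rcons_prefixP [_ P0] /rcons_prefixP [_ P1].
  move: Q0 Q1 => /rcons_prefixP [_ Q0] /rcons_prefixP [_ Q1].
  have := emb_sides HEX Hw; rewrite -Q0 -Q1 P0 P1.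
  by apply: contra => /eqP ->.
Qed.


Fixpoint ht (t : btree I) : nat := if t is Node l r then (maxn (ht l) (ht r)).+1 else 0.

Lemma subt_size t q s : subt t q = Some s -> size q <= ht t.
Proof.
elim: t q => [i|l IHl r IHr] [|b q] //= H.
by rewrite ltnS; case: b H => /= H; [apply: leq_trans (IHr _ H) (leq_maxr _ _)|apply: leq_trans (IHl _ H) (leq_maxl _ _)].
Qed.

Lemma node_pos S q : (forall p, S p -> innerT T p) -> node S q -> exists s, subt T q = Some s.
Proof.
move=> H0 [/H0|[i Hi]]; last by exists (Leaf i).
by rewrite /innerT /is_inner subFT; case: (subt T q) => // s _; eexists.
Qed.

Section Cfg.
Variables (S : seq bool -> Prop) (E : seq bool -> seq bool -> Prop).
Hypothesis HC : cfg_ok S E.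

Lemma anc_sb p z : anc E p z -> sb z p.
Proof.
case: HC => _ C1 _ _ _; elim=> [z' /C1 [] //|z' q /C1 [_ H _] _ IH]; exact: sb_trans H IH.
Qed.

Lemma anc_top p z : anc E p z -> S p.
Proof. case: HC => _ C1 _ _ _; by elim=> [z' /C1 []|]. Qed.

Lemma anc_first p z : anc E p z -> exists q, E z q /\ (q = p \/ anc E p q).
Proof.
case=> [z' H|z' q H1 H2]; first by exists p; split=> //; left.
by exists q; split=> //; right.
Qed.

Lemma anc_trans p q z : anc E p q -> anc E q z -> anc E p z.
Proof. move=> H1; elim=> [z' H|z' q' H _ IH]; [exact: ancS H H1|exact: ancS H IH]. Qed.

Lemma anc_chain b x : anc E b x -> forall a, anc E a x -> size b < size a -> anc E b a.
Proof.
case: HC => _ _ C2 _ _.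
elim=> [x' Hb|x' q Hq Hbq IH] a Ha Hs.
- have [q [Hq [Eqa|Hqa]]] := anc_first Ha.
    by subst q; rewrite (C2 _ _ _ Hq Hb) ltnn in Hs.
  rewrite (C2 _ _ _ Hq Hb) in Hqa; have /andP [_ Hs'] := anc_sb Hqa.
  by move: (ltn_trans Hs Hs'); rewrite ltnn.
- have [q' [Hq' H]] := anc_first Ha; rewrite (C2 _ _ _ Hq' Hq) in H.
  by case: H => [<-|Hqa]; [exact: Hbq | exact: IH _ Hqa Hs].
Qed.

Lemma side_anc (u w : seq bool) (b : bool) (z : seq bool) : anc E u w -> prefix (rcons u b) w -> E z u -> prefix (rcons u b) z ->
  z = w \/ anc E z w.
Proof.
case: HC => _ C1 _ _ C3u.
elim=> [w' Hw|w' q Hq Hanc IH] Hw' Hz Hzp.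
  by left; exact: C3u _ _ _ _ Hz Hw Hzp Hw'.
have Hsb := anc_sb Hanc; have [_ Hwq _] := C1 _ _ Hq.
have Hqp : prefix (rcons u b) q.
  apply/rcons_prefixP; split=> //; move/rcons_prefixP: Hw' => [_ <-].
  case/andP: Hwq => Hpq _; case/andP: Hsb => _ Hs; exact: esym (prefix_nth Hpq Hs).
case: (IH Hqp Hz Hzp) => [->|H]; right; [exact: anc1 Hq | exact: ancS Hq H].
Qed.

Lemma leaf_below (t : seq bool) i (z : seq bool) s : subt T t = Some (Leaf i) -> prefix t z -> subt T z = Some s -> z = t.
Proof.
move=> Ht /prefixP [r ->]; rewrite subt_cat Ht /=; case: r => [|b r]; first by rewrite cats0.
by [].
Qed.

Lemma pos_prefix (t z : seq bool) s : prefix t z -> subt T z = Some s -> exists s', subt T t = Some s'.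
Proof. by move=> /prefixP [r ->]; rewrite subt_cat; case: (subt T t) => // s'; exists s'. Qed.

Lemma prefix_neq_sb (t z : seq bool) : prefix t z -> z <> t -> sb z t.
Proof.
move=> H Hne; rewrite /sb H /= ltn_neqAle size_prefix // andbT; apply/eqP => Hs.
by apply: Hne; move: H; rewrite prefixE Hs take_size => /eqP.
Qed.

Definition full s := forall q, innerT T q -> prefix s q -> S q.

Lemma full_par s : S s -> full s -> forall z, node S z -> sb z s -> exists q, E z q /\ prefix s q.
Proof.
case: HC => C0 C1 C2 C3 C3u.
suff: forall n s, ht T - size s < n -> S s -> full s ->
    forall z, node S z -> sb z s -> exists q, E z q /\ prefix s q.
  by move=> H; apply: (H (ht T - size s).+1).
elim=> [//|n IH] {}s Hn Ss Fs z Nz Hzs.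
pose b := nth false z (size s); pose t := rcons s b.
have Htz : prefix t z by apply/rcons_prefixP.
have [zb [Hzb Hzbp]] := C3 s b Ss.
have [sz Hsz] := node_pos C0 Nz.
have [st Hst] := pos_prefix Htz Hsz.
have [_ _ Nzb] := C1 _ _ Hzb; have [szb Hszb] := node_pos C0 Nzb.
case: st Hst => [i|l r] Hst.
  have Ez := leaf_below Hst Htz Hsz; have Ezb := leaf_below Hst Hzbp Hszb.
  by exists s; split; [rewrite Ez -Ezb | exact: prefix_refl].
have It : innerT T t by rewrite /innerT /is_inner subFT Hst.
have St : S t := Fs t It (prefix_rcons s b).
have Ft : full t by move=> q Hq Htq; apply: Fs Hq (prefix_trans (prefix_rcons s b) Htq).
have Hn' : ht T - size t < n.
  have := subt_size Hst; rewrite size_rcons; move: Hn; clear; lia.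
case: (eqVneq z t) => [Ezt|Hzt].
  case: (eqVneq zb t) => [Ezb|Hzb'].
    by exists s; split; [rewrite Ezt -Ezb | exact: prefix_refl].
  have [q [Hq Htq]] := IH t Hn' St Ft zb Nzb (prefix_neq_sb Hzbp (elimN eqP Hzb')).
  have Eq := C2 _ _ _ Hq Hzb; subst q.
  by have := size_prefix Htq; rewrite size_rcons ltnn.
have [q [Hq Htq]] := IH t Hn' St Ft z Nz (prefix_neq_sb Htz (elimN eqP Hzt)).
by exists q; split=> //; exact: prefix_trans (prefix_rcons s b) Htq.
Qed.

End Cfg.

Lemma cfg_K S1 E1 S2 E2 : cfg_ok S1 E1 -> cfg_ok S2 E2 -> (forall q, S1 q <-> S2 q) ->
  (forall z p, E1 z p -> anc E2 p z) -> forall z p, E2 z p -> E1 z p.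
Proof.
move=> H1 H2 HS HE.
suff: forall n (z : seq bool), ht T - size z < n -> forall (u : seq bool), E2 z u -> E1 z u.
  by move=> H z p; exact: H (ht T - size z).+1 z (ltnSn _) p.
elim=> [//|n IH] z Hn u Hzu.
apply: NNPP => Hn1.
have [_ _ C21 C31 _] := H1; have [C02 C12 C22 C32 C3u2] := H2.
have [Su Hzsb Hnz] := C12 _ _ Hzu.
pose b := nth false z (size u).
have Hzp : prefix (rcons u b) z by apply/rcons_prefixP.
have [w [Hw Hwp]] := C31 u b (proj2 (HS u) Su).
have Hwz : w <> z by move=> E; apply: Hn1; rewrite -E.
case: (side_anc H2 (HE _ _ Hw) Hwp Hzu Hzp) => [E|Hzw]; first by apply: Hwz; rewrite E.
have [u' [Hwu' Hu']] := anc_first Hzw.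
have Hsw := anc_sb H2 Hzw.
have Hne : ~ E1 w u'.
  move=> H; have Eu := C21 _ _ _ Hw H; subst u'.
  case/andP: Hzsb => _ Hs1; case: Hu' => [Ez|Ha].
    by subst z; rewrite ltnn in Hs1.
  have /andP [_ Hs2] := anc_sb H2 Ha; by move: (ltn_trans Hs1 Hs2); rewrite ltnn.
apply: Hne; apply: (IH w _ u' Hwu').
have [_ _ Nw] := C12 _ _ Hwu'; have [sw Hsw'] := node_pos C02 Nw.
have := subt_size Hsw'; case/andP: Hsw => _; move: Hn; clear; lia.
Qed.


End WithT.


Definition pb (P : Prop) : bool := if excluded_middle_informative P then true else false.
Lemma pbP (P : Prop) : reflect P (pb P).
Proof. by rewrite /pb; case: excluded_middle_informative => H; constructor. Qed.

Section Build.
Variable I : finType.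
Variable T : btree I.
Hypothesis HT : is_forest [:: T].
Variables (S : seq bool -> Prop) (E : seq bool -> seq bool -> Prop).
Hypothesis HC : cfg_ok T S E.

Fixpoint tposs (t : btree I) : seq (seq bool) :=
  [::] :: (if t is Node l r then map (cons false) (tposs l) ++ map (cons true) (tposs r) else [::]).

Lemma tpossP t q : (q \in tposs t) = isSome (subt t q).
Proof.
elim: t q => [i|l IHl r IHr] [|b q] //=; rewrite inE //=.
have injt : injective (cons true) by move=> x y [].
have injf : injective (cons false) by move=> x y [].
rewrite mem_cat; case: b.
  rewrite (mem_map injt) -IHr.
  by apply/orP/idP => [[/mapP [x _]//|//]|->]; right.
rewrite (mem_map injf) -IHl.
by apply/orP/idP => [[//|/mapP [x _]//]|->]; left.
Qed.

Lemma tposs_uniq t : uniq (tposs t).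
Proof.
elim: t => [i|l IHl r IHr] //=.
rewrite mem_cat cat_uniq !map_inj_uniq ?IHl ?IHr /=; try by move=> x y [].
rewrite andbT; apply/andP; split.
  by apply/norP; split; apply/negP => /mapP [x _].
by apply/hasPn => x /mapP [y _ ->]; apply/negP => /mapP [z _].
Qed.

Definition ch (z : seq bool) (b : bool) : seq bool :=
  epsilon (inhabits [::]) (fun z' => E z' z /\ prefix (rcons z b) z').

Lemma chP z b : S z -> E (ch z b) z /\ prefix (rcons z b) (ch z b).
Proof.
move=> Sz; have [_ _ _ C3 _] := HC.
exact: (epsilon_spec (inhabits [::]) (fun z' => E z' z /\ prefix (rcons z b) z') (C3 z b Sz)).
Qed.

Lemma ch_uniq z z' b : E z' z -> prefix (rcons z b) z' -> z' = ch z b.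
Proof.
move=> H1 H2; have [_ C1 _ _ C3u] := HC; have [Sz _ _] := C1 _ _ H1.
have [H3 H4] := chP b Sz; exact: C3u _ _ _ _ H1 H3 H2 H4.
Qed.

Fixpoint lf (t : btree I) : I := match t with Leaf i => i | Node l _ => lf l end.

Inductive Rep : seq bool -> btree I -> Prop :=
| RepL z i : ~ S z -> subt T z = Some (Leaf i) -> Rep z (Leaf i)
| RepN z l r : S z -> Rep (ch z false) l -> Rep (ch z true) r -> Rep z (Node l r).

Definition i0 := lf T.

Fixpoint bld (n : nat) (z : seq bool) : btree I :=
  match n with
  | 0 => Leaf i0
  | n'.+1 => if excluded_middle_informative (S z) then Node (bld n' (ch z false)) (bld n' (ch z true))
             else if subt T z is Some (Leaf i) then Leaf i else Leaf i0
  end.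

Lemma bld_Rep n z : node T S z -> ht T - size z < n -> Rep z (bld n z).
Proof.
have [C0 C1 _ _ _] := HC.
elim: n z => [//|n IH] z Nz Hn /=.
case: excluded_middle_informative => Sz.
  have H b : Rep (ch z b) (bld n (ch z b)).
    have [Hc Hp] := chP b Sz; have [_ Hsb Nc] := C1 _ _ Hc.
    apply: (IH _ Nc); have [s Hs] := node_pos C0 Nc; have := subt_size Hs.
    case/andP: Hsb => _; move: Hn; clear; lia.
  exact: RepN.
case: Nz => [//|[i Hi]]; rewrite Hi; exact: RepL.
Qed.

Definition walk (z : seq bool) (p : seq bool) := foldl ch z p.

Lemma Rep_sub z t p s : Rep z t -> subt t p = Some s -> Rep (walk z p) s.
Proof.
elim: p z t => [|b p IH] z t HR /=; first by rewrite subt0 => -[<-].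
case: HR => [z' i _ _ //|z' l r _ Hl Hr]; case: b => /= H; [exact: IH Hr H|exact: IH Hl H].
Qed.

Lemma Rep_S z l r : Rep z (Node l r) -> S z.
Proof. by case E: _ / => //. Qed.

Lemma Rep_leaf z i : Rep z (Leaf i) -> ~ S z /\ subt T z = Some (Leaf i).
Proof. by case E: _ / => // [z' i' H1 H2] [<-]. Qed.

Lemma Rep_node z t : Rep z t -> node T S z.
Proof. by case=> [z' i _ Hi|z' l r Hs _ _]; [right; exists i|left]. Qed.

Lemma Rep_Sinv z t : Rep z t -> S z -> exists l r, t = Node l r.
Proof. by case=> [z' i H _ /H|z' l r _ _ _ _] //; exists l, r. Qed.

Lemma walk_prefix z t p s : Rep z t -> subt t p = Some s -> prefix z (walk z p).
Proof.
elim: p z t => [|b p IH] z t HR /=; first by rewrite prefix_refl.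
case: HR => [z' i _ _ //|z' l r Sz Hl Hr] H.
have [_ Hp] := chP b Sz.
have H' : prefix (ch z' b) (walk (ch z' b) p) by case: b Hp H => _ /= H; [exact: IH Hr H|exact: IH Hl H].
exact: prefix_trans (prefix_trans (prefix_rcons z' b) Hp) H'.
Qed.

Lemma walk_side z t b p s : Rep z t -> subt t (b :: p) = Some s -> prefix (rcons z b) (walk z (b :: p)).
Proof.
case=> [z' i _ _ //|z' l r Sz Hl Hr] H.
have [_ Hp] := chP b Sz.
have H' : prefix (ch z' b) (walk (ch z' b) p) by case: b Hp H => _ /= H; [exact: walk_prefix Hr H|exact: walk_prefix Hl H].
exact: prefix_trans Hp H'.
Qed.

Definition deq (a x : seq bool) := a = x \/ anc E a x.

Lemma walk_anc z t p s : Rep z t -> subt t p = Some s -> deq z (walk z p).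
Proof.
elim: p z t => [|b p IH] z t HR /=; first by left.
case: HR => [z' i _ _ //|z' l r Sz Hl Hr] H.
have [Hc _] := chP b Sz.
have : deq (ch z' b) (walk (ch z' b) p) by case: b Hc H => _ /= H; [exact: IH Hr H|exact: IH Hl H].
case=> [<-|Ha]; right; [exact: anc1 Hc| exact: anc_trans (anc1 Hc) Ha].
Qed.


Definition isroot z := node T S z /\ ~ (exists p, E z p).
Definition roots := filter (fun z => pb (isroot z)) (tposs T).
Definition NN := (ht T).+1.
Definition G := map (bld NN) roots.

Lemma roots_uniq : uniq roots.
Proof. exact: filter_uniq (tposs_uniq T). Qed.

Lemma mem_roots z : (z \in roots) <-> isroot z.
Proof.
rewrite mem_filter; split; first by case/andP => /pbP.
move=> H; apply/andP; split; first by apply/pbP.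
have [C0 _ _ _ _] := HC; have [s Hs] := node_pos C0 (proj1 H); by rewrite tpossP Hs.
Qed.

Lemma root_Rep z : isroot z -> Rep z (bld NN z).
Proof. move=> [Nz _]; apply: bld_Rep Nz _; rewrite /NN; lia. Qed.

Lemma prefix_same_size (a b x : seq bool) : prefix a x -> prefix b x -> size a = size b -> a = b.
Proof. rewrite !prefixE => /eqP Ha /eqP Hb Hs; by rewrite -Ha -Hb Hs. Qed.

Lemma deq_prefix a x : deq a x -> prefix a x.
Proof. by case=> [->|/(anc_sb HC) /andP []]; [exact: prefix_refl|]. Qed.

Lemma deq_total a b x : deq a x -> deq b x -> deq a b \/ deq b a.
Proof.
move=> Ha Hb; case: Ha => [Ea|Ha]; first by right; rewrite -Ea in Hb.
case: Hb => [Eb|Hb]; first by left; rewrite Eb; right.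
case: (ltngtP (size a) (size b)) => Hs.
- by left; right; exact: (anc_chain HC Ha Hb Hs).
- by right; right; exact: (anc_chain HC Hb Ha Hs).
- left; left; apply: (@prefix_same_size a b x _ _ Hs).
  + by case/andP: (anc_sb HC Ha) => ->.
  + by case/andP: (anc_sb HC Hb) => ->.
Qed.

Lemma root_deq_uniq r r' x : isroot r -> isroot r' -> deq r x -> deq r' x -> r = r'.
Proof.
move=> [_ Hr] [_ Hr'] H H'; case: (deq_total H H') => [[//|Ha]|[//|Ha]].
  by have [q [Hq _]] := anc_first Ha; case: Hr'; exists q.
by have [q [Hq _]] := anc_first Ha; case: Hr; exists q.
Qed.

Lemma root_exists x : node T S x -> exists r, isroot r /\ deq r x.
Proof.
have [C0 C1 _ _ _] := HC.
suff: forall n x, size x < n -> node T S x -> exists r, isroot r /\ deq r x.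
  by move=> H; apply: (H (size x).+1).
elim=> [//|n IH] {}x Hn Nx.
case: (classic (exists p, E x p)) => [[p Hp]|Hno]; last by exists x; split=> //; left.
have [Sp Hsb _] := C1 _ _ Hp.
have [r [Hr Hd]] := IH p (leq_trans (proj2 (andP Hsb)) Hn) (or_introl Sp).
exists r; split=> //; right; case: Hd => [->|Ha]; [exact: anc1 Hp|exact: ancS Hp Ha].
Qed.

Definition vpos (w : vtx) := walk (nth [::] roots w.1) w.2.
Definition psiG (w : vtx) : vtx := (0%N, vpos w).

Lemma G_sub w s : subF G w = Some s ->
  exists r, [/\ onth roots w.1 = Some r, isroot r, subt (bld NN r) w.2 = Some s & Rep (vpos w) s].
Proof.
rewrite /subF /G onth_map; case Er: (onth roots w.1) => [r|] // H.
have Hr : isroot r by apply/mem_roots; apply/onthP; exists w.1.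
exists r; split=> //; rewrite /vpos (onth_nth [::] _ _ _ Er); exact: Rep_sub (root_Rep Hr) H.
Qed.

Lemma vpos_child w b : vpos (child w b) = ch (vpos w) b.
Proof. by rewrite /vpos /walk /= foldl_rcons. Qed.

Lemma G_target w u : target G [:: T] psiG w u -> u = psiG w.
Proof.
case=> [[_ ->]//|[i [Hw Hu]]]; rewrite (leafT_subF HT Hu) /psiG.
have [r [_ _ _ HR]] := G_sub Hw; have [_ Hi] := Rep_leaf HR; by rewrite -(lpos_uniq HT Hi).
Qed.

Lemma walk_inj z t p p' s s' : Rep z t -> subt t p = Some s -> subt t p' = Some s' ->
  walk z p = walk z p' -> p = p'.
Proof.
elim: p z t p' s s' => [|b p IH] z t [|b' p'] s s' HR H H' //.
- move=> Ew; have := size_prefix (walk_side HR H'); rewrite -Ew /= size_rcons ltnn.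
  by [].
- move=> Ew; have := size_prefix (walk_side HR H); rewrite Ew /= size_rcons ltnn.
  by [].
move=> Ew; have P1 := walk_side HR H; have P2 := walk_side HR H'.
rewrite Ew in P1; move: P1 P2 => /rcons_prefixP [_ E1] /rcons_prefixP [_ E2].
have Eb : b = b' := etrans (esym E1) E2.
subst b'; clear E1 E2; case: HR H H' Ew => [z0 i _ _ //|z0 l r _ Hl Hr]; case: b => /= H H' Ew.
  by rewrite (IH _ _ _ _ _ Hr H H' Ew).
by rewrite (IH _ _ _ _ _ Hl H H' Ew).
Qed.

Lemma vpos_inj w w' s s' : subF G w = Some s -> subF G w' = Some s' -> vpos w = vpos w' -> w = w'.
Proof.
move=> Hw Hw' Ew.
have [r [Er Hr Hs HR]] := G_sub Hw; have [r' [Er' Hr' Hs' HR']] := G_sub Hw'.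
move: Ew; rewrite /vpos (onth_nth [::] _ _ _ Er) (onth_nth [::] _ _ _ Er') => Ew.
have Err : r = r'.
  apply: (root_deq_uniq Hr Hr' (walk_anc (root_Rep Hr) Hs)); rewrite Ew.
  exact: (walk_anc (root_Rep Hr') Hs').
subst r'; have Ej : w.1 = w'.1.
  apply: (onth_inj _ _ _ roots_uniq); last by rewrite Er Er'.
  by rewrite gtn_min; apply/orP; left; rewrite -onthTE Er'.
have Ep := walk_inj (root_Rep Hr) Hs Hs' Ew.
by case: w w' Ej Ep {Hw Hw' Er Hs HR Er' Hs' HR' Ew} => [j p] [j' p'] /= -> ->.
Qed.

Lemma G_embeds : embeds G [:: T] psiG.
Proof.
have [C0 C1 _ _ _] := HC.
have Hin : forall w, is_inner G w -> S (vpos w).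
  move=> w /is_innerP [l [r Hw]]; have [_ [_ _ _ HR]] := G_sub Hw; exact: Rep_S HR.
split; [|split; [|split]].
- move=> w Hw; exact: C0 _ (Hin _ Hw).
- move=> w w' Hw Hw' [Ew]; have [s Hs] := inner_ex Hw; have [s' Hs'] := inner_ex Hw'.
  exact: vpos_inj Hs Hs' Ew.
- move=> w b u Hw /G_target ->; apply/strict_below_T; rewrite vpos_child.
  by have [Hc _] := chP b (Hin _ Hw); have [_ Hsb _] := C1 _ _ Hc.
- move=> w u0 u1 Hw /G_target -> /G_target ->; rewrite /psiG /= !vpos_child.
  have [_ P0] := chP false (Hin _ Hw); have [_ P1] := chP true (Hin _ Hw).
  by move/rcons_prefixP: P0 => [_ ->]; move/rcons_prefixP: P1 => [_ ->].
Qed.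


Lemma G_timg w s : subF G w = Some s -> timg T G psiG w = vpos w.
Proof.
move=> Hw; case: s Hw => [i|l r] Hw.
  rewrite (timg_leaf T psiG Hw); have [r [_ _ _ HR]] := G_sub Hw.
  by have [_ Hi] := Rep_leaf HR; rewrite -(lpos_uniq HT Hi).
by rewrite timg_in // /is_inner Hw.
Qed.

Lemma path_exists r t q : Rep r t -> deq r q -> exists p s, subt t p = Some s /\ walk r p = q.
Proof.
have [_ C1 _ _ _] := HC.
move=> HR [<-|Ha]; first by exists [::], t; rewrite subt0.
elim: Ha => [z Hz|z q' Hz _ [p [s [Hs Hw]]]].
- have [Sr Hsb _] := C1 _ _ Hz; have [l [r' Et]] := Rep_Sinv HR Sr; subst t.
  pose g := nth false z (size r).
  have Ez : z = ch r g by apply: ch_uniq Hz _; apply/rcons_prefixP.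
  exists [:: g], (if g then r' else l); split; first by case: g {Ez}; rewrite /= subt0.
  by rewrite /walk /= -Ez.
- have [Sq Hsb _] := C1 _ _ Hz; have HR' := Rep_sub HR Hs; rewrite Hw in HR'.
  have [l [r' Es]] := Rep_Sinv HR' Sq; subst s.
  pose g := nth false z (size q').
  have Ez : z = ch q' g by apply: ch_uniq Hz _; apply/rcons_prefixP.
  exists (rcons p g), (if g then r' else l); split.
    by rewrite subt_rcons Hs /=.
  by rewrite /walk foldl_rcons -/(walk r p) Hw -Ez.
Qed.

Lemma G_cS q : cS T G psiG q <-> S q.
Proof.
split.
  move=> [w [Hw <-]]; have [l [r Hs]] := (elimT (is_innerP _ _) Hw).
  rewrite (G_timg Hs); have [_ [_ _ _ HR]] := G_sub Hs; exact: Rep_S HR.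
move=> Sq; have [r [Hr Hd]] := root_exists (or_introl Sq).
have [p [s [Hs Hw]]] := path_exists (root_Rep Hr) Hd.
have [j Hj] : exists j, onth roots j = Some r by apply/onthP; apply/mem_roots.
have HG : subF G (j, p) = Some s by rewrite /subF /G onth_map Hj.
have HR : Rep q s by rewrite -Hw; exact: Rep_sub (root_Rep Hr) Hs.
have [l [r' Es]] := Rep_Sinv HR Sq; subst s.
exists (j, p); split; first by rewrite /is_inner HG.
by rewrite (G_timg HG) /vpos /= (onth_nth [::] _ _ _ Hj).
Qed.

Lemma G_cE z p : cE T G psiG z p <-> E z p.
Proof.
split.
  move=> [w [g [Hw <- <-]]]; have [s Hs] := inner_ex Hw; have [sc Hsc] := inner_child g Hw.
  rewrite (G_timg Hs) (G_timg Hsc) vpos_child.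
  have [l [r Hs']] := (elimT (is_innerP _ _) Hw); have [_ [_ _ _ HR]] := G_sub Hs'.
  by have [] := chP g (Rep_S HR).
move=> Hz; have [_ C1 _ _ _] := HC; have [Sp Hsb _] := C1 _ _ Hz.
have [w [Hw Ew]] := proj2 (G_cS p) Sp.
pose g := nth false z (size p).
have Ez : z = ch p g by apply: ch_uniq Hz _; apply/rcons_prefixP.
exists w, g; split=> //.
have [s Hs] := inner_ex Hw; have [sc Hsc] := inner_child g Hw.
by rewrite (G_timg Hsc) vpos_child -(G_timg Hs) Ew -Ez.
Qed.

Lemma anc_top_dec a x : anc E a x -> exists c, E c a /\ deq c x.
Proof.
elim=> [z Hz|z q Hz _ [c [Hc Hd]]]; first by exists z; split=> //; left.
exists c; split=> //; right; case: Hd => [->|Ha]; [exact: anc1 Hz|exact: ancS Hz Ha].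
Qed.

Lemma Rep_count z t i : Rep z t -> count_mem i (leaves t) = pb (deq z (lpos T i)).
Proof.
have [C0 C1 _ _ _] := HC.
elim=> [z' i' NS Hi|z' l r Sz Hl IHl Hr IHr].
- rewrite /= addn0.
  case: pbP => [[E'|Ha]|H].
  + by rewrite (lpos_uniq HT Hi) in E'; rewrite (lpos_inj HT E') eqxx.
  + by case: NS; exact: (anc_top HC Ha).
  + case: (i' =P i) => // E'; case: H; left; by rewrite (lpos_uniq HT Hi) E'.
- have -> : leaves (Node l r) = leaves l ++ leaves r by [].
  rewrite count_cat IHl IHr.
  set x := lpos T i.
  have Hzx : z' <> x.
    by move=> E'; apply: (innerT_leaf (C0 _ Sz)); rewrite E' /x; exact: lposP.
  have Hside : forall b, deq (ch z' b) x -> prefix (rcons z' b) x.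
    move=> b /deq_prefix; have [_ P] := chP b Sz; exact: prefix_trans P.
  have Hiff : deq z' x <-> deq (ch z' false) x \/ deq (ch z' true) x.
    split.
      case=> [//|Ha]; have [c [Hc Hd]] := anc_top_dec Ha.
      have [_ Hsb _] := C1 _ _ Hc; pose g := nth false c (size z').
      have Ec : c = ch z' g by apply: ch_uniq Hc _; apply/rcons_prefixP.
      by rewrite Ec in Hd; case: g {Ec} Hd => Hd; [right|left].
    have H b : deq (ch z' b) x -> deq z' x.
      have [Hc _] := chP b Sz; case=> [<-|Ha]; right; [exact: anc1 Hc|exact: anc_trans (anc1 Hc) Ha].
    by case=> /H.
  have Hex : ~ (deq (ch z' false) x /\ deq (ch z' true) x).
    by case=> /Hside /rcons_prefixP [_ H0] /Hside /rcons_prefixP [_ H1]; rewrite H0 in H1.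
  case: (pbP (deq (ch z' false) x)) => H0; case: (pbP (deq (ch z' true) x)) => H1;
    case: pbP => H2 //; try by case: Hex.
  + by case: H2; apply/Hiff; left.
  + by case: H2; apply/Hiff; right.
  + by case/Hiff: H2.
Qed.

Lemma G_forest : is_forest G.
Proof.
move=> i; rewrite count_flatten /G -!map_comp.
set x := lpos T i.
have Nx : node T S x by right; exists i; exact: lposP.
transitivity (sumn [seq (nat_of_bool (pb (deq r x))) | r <- roots]).
  congr sumn; apply/eq_in_map => r /mem_roots Hr /=; exact: Rep_count (root_Rep Hr).
rewrite (sumn_count (fun r => pb (deq r x))).
have [r0 [Hr0 Hd0]] := root_exists Nx.
rewrite (eq_in_count (a2 := pred1 r0)).
  have Hm : r0 \in roots by apply/mem_roots.
  by rewrite count_uniq_mem ?roots_uniq // Hm.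
move=> r /mem_roots Hr /=; apply/pbP/eqP => [Hd|->//].
exact: root_deq_uniq Hr Hr0 Hd Hd0.
Qed.

End Build.

Lemma build_ok (I : finType) (T : btree I) (S : seq bool -> Prop) E :
  is_forest [:: T] -> cfg_ok T S E ->
  exists G psi, [/\ is_forest G, embeds G [:: T] psi,
    (forall q, cS T G psi q <-> S q) & (forall z p, cE T G psi z p <-> E z p)].
Proof.
move=> HT HC; exists (G T S E), (psiG T S E); split.
- exact: G_forest.
- exact: G_embeds.
- exact: G_cS.
- exact: G_cE.
Qed.


Lemma ex_min_nat (P : nat -> Prop) : (exists n, P n) -> exists n, P n /\ forall k, P k -> n <= k.
Proof.
move=> H; have H' : exists n, pb (P n) by case: H => n Hn; exists n; apply/pbP.
case: (ex_minnP H') => n /pbP Hn Hmin; exists n; split=> // k Hk; apply: Hmin; exact/pbP.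
Qed.

Lemma prefix_rcons_le (c m : seq bool) b : prefix c (rcons m b) -> size c <= size m -> prefix c m.
Proof.
rewrite !prefixE => /eqP Hc Hs; apply/eqP; rewrite -{2}Hc -cats1 takel_cat //.
Qed.

Lemma prefix_le (a b x : seq bool) : prefix a x -> prefix b x -> size a <= size b -> prefix a b.
Proof.
move=> Ha Hb Hs; case: (prefix_total Ha Hb) => // H.
have := size_prefix H => Hs'; have Es : size a = size b by apply/eqP; rewrite eqn_leq Hs Hs'.
by rewrite (prefix_same_size Ha Hb Es) prefix_refl.
Qed.

Lemma anc_ext (E E' : seq bool -> seq bool -> Prop) p z :
  (forall z p, E z p -> E' z p) -> anc E p z -> anc E' p z.
Proof. move=> H; elim=> [z' /H|z' q /H Hq _ IH]; [exact: anc1|exact: ancS Hq IH]. Qed.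

Lemma anc_lift (E E' : seq bool -> seq bool -> Prop) p z :
  (forall z p, E z p -> anc E' p z) -> anc E p z -> anc E' p z.
Proof.
move=> H; elim=> [z' /H //|z' q /H Hq _ IH]; exact: anc_trans IH Hq.
Qed.

Section Main.
Variables (I : finType) (T : btree I).
Hypothesis HT : is_forest [:: T].
Variables (SF : seq bool -> Prop) (EF : seq bool -> seq bool -> Prop).
Hypothesis HF : cfg_ok T SF EF.
Variable m : seq bool.
Hypothesis Hmi : innerT T m.
Hypothesis HmS : ~ SF m.
Hypothesis Hmin : forall q, innerT T q -> sb q m -> SF q.

Definition pc b := rcons m b.
Definition Ch c := SF c /\ (exists b, anc EF c (pc b)).

Lemma sb_pc b : sb (pc b) m.
Proof. by rewrite /sb /pc prefix_rcons size_rcons ltnSn. Qed.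

Lemma pc_pos b : exists s, subt T (pc b) = Some s.
Proof.
move: Hmi; rewrite /innerT /is_inner subFT /pc subt_rcons.
by case: (subt T m) => [[i|l r]|] //= _; eexists.
Qed.

Lemma node_pc b : node T SF (pc b).
Proof.
have [s Hs] := pc_pos b; case: s Hs => [i|l r] Hs; first by right; exists i.
left; apply: Hmin (sb_pc b); by rewrite /innerT /is_inner subFT Hs.
Qed.

Lemma not_node_m : ~ node T SF m.
Proof. by case=> [//|[i Hi]]; exact: innerT_leaf Hmi Hi. Qed.

Lemma Ch_pm c : Ch c -> prefix c m /\ size c < size m.
Proof.
move=> [Sc [b Ha]]; have /andP [P1 S1] := anc_sb HF Ha.
rewrite /pc size_rcons ltnS in S1.
have Pm := prefix_rcons_le P1 S1; split=> //.
rewrite ltn_neqAle S1 andbT; apply/eqP => Es.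
by apply: HmS; move: Pm; rewrite prefixE Es take_size => /eqP ->.
Qed.

Lemma Ch_ne_m c : Ch c -> c <> m.
Proof. by move=> /Ch_pm [_ Hs] E; rewrite E ltnn in Hs. Qed.

Lemma Ch_ne_pc c b : Ch c -> c <> pc b.
Proof. move=> /Ch_pm [_ Hs] E; move: Hs; rewrite E /pc size_rcons; lia. Qed.

Lemma pc_ne_m b : pc b <> m.
Proof. move=> E; have := congr1 size E; rewrite /pc size_rcons; lia. Qed.

Lemma Ch_up c q : Ch c -> EF c q -> Ch q.
Proof.
move=> [Sc [b Ha]] Hq; have [_ C1 _ _ _] := HF; have [Sq _ _] := C1 _ _ Hq.
split=> //; exists b; exact: anc_trans (anc1 Hq) Ha.
Qed.

Lemma pc_up b q : EF (pc b) q -> Ch q.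
Proof.
move=> Hq; have [_ C1 _ _ _] := HF; have [Sq _ _] := C1 _ _ Hq.
by split=> //; exists b; exact: anc1.
Qed.

Lemma Ch_eq c c' : Ch c -> Ch c' -> size c = size c' -> c = c'.
Proof. move=> /Ch_pm [P _] /Ch_pm [P' _]; exact: (prefix_same_size P P'). Qed.

Lemma Ch_lt c c' : Ch c -> Ch c' -> size c < size c' -> sb c' c.
Proof.
move=> /Ch_pm [P _] /Ch_pm [P' _] Hs; rewrite /sb Hs andbT.
exact: prefix_le P P' (ltnW Hs).
Qed.

(* the m-side bit of an ancestor p of m *)
Definition ms (p : seq bool) := nth false m (size p).

Lemma Ch_side c p : Ch c -> Ch p -> size p < size c -> prefix (rcons p (ms p)) c.
Proof.
move=> Hc Hp Hs; have [P _] := Ch_pm Hc; apply/rcons_prefixP; split; first exact: Ch_lt.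
by rewrite /ms (prefix_nth P Hs).
Qed.

Lemma m_side p : Ch p -> prefix (rcons p (ms p)) m.
Proof.
move=> Hp; have [P Hs] := Ch_pm Hp; apply/rcons_prefixP; split=> //.
by rewrite /sb P Hs.
Qed.

Lemma pc_side p b : Ch p -> prefix (rcons p (ms p)) (pc b).
Proof. move=> Hp; exact: prefix_trans (m_side Hp) (prefix_rcons m b). Qed.

Definition SG q := SF q \/ q = m.
Definition EG z p :=
  [\/ exists b, z = pc b /\ p = m,
      z = m /\ Ch p /\ (forall c, Ch c -> size c <= size p),
      Ch z /\ Ch p /\ size p < size z /\ (forall c, Ch c -> size c < size z -> size c <= size p) |
      (forall b, z <> pc b) /\ z <> m /\ ~ Ch z /\ EF z p].


Lemma Ch_next p : Ch p -> (exists c, Ch c /\ size p < size c) ->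
  exists c0, [/\ EG c0 p, Ch c0 & size p < size c0].
Proof.
move=> Hp [c [Hc Hs]].
have [n [[c0 [Hc0 [Hs0 En]]] Hmn]] :=
  @ex_min_nat (fun n => exists c, Ch c /\ size p < size c /\ size c = n) (ex_intro _ _ (ex_intro _ c (conj Hc (conj Hs erefl)))).
subst n; exists c0; split=> //; constructor 3; do 3 (split=> //).
move=> c' Hc' Hlt; rewrite leqNgt; apply/negP => Hgt.
have := Hmn (size c') (ex_intro _ c' (conj Hc' (conj Hgt erefl))); lia.
Qed.

Lemma Ch_ancG p : Ch p -> anc EG p m.
Proof.
suff: forall n p, size m - size p < n -> Ch p -> anc EG p m.
  by move=> H Hp; apply: (H (size m - size p).+1).
elim=> [//|n IH] {}p Hn Hp.
case: (classic (exists c, Ch c /\ size p < size c)) => [Hex|Hno].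
  have [c0 [H0 Hc0 Hs0]] := Ch_next Hp Hex.
  have [_ Hsc0] := Ch_pm Hc0.
  apply: anc_trans (anc1 H0) (IH c0 _ Hc0); move: Hn Hs0 Hsc0; clear; lia.
apply: anc1; constructor 2; do 2 (split=> //).
move=> c Hc; rewrite leqNgt; apply/negP => Hlt; apply: Hno; by exists c.
Qed.

Lemma ChChanc z p : Ch z -> Ch p -> size p < size z -> anc EG p z.
Proof.
suff: forall n z, size z - size p < n -> Ch z -> Ch p -> size p < size z -> anc EG p z.
  by move=> H Hz; apply: (H (size z - size p).+1).
elim=> [//|n IH] {}z Hn Hz Hp Hs.
have [k [[c1 [Hc1 [Hs1 Ek]]] Hmk]] := @ex_min_nat
  (fun k => exists c, Ch c /\ size c < size z /\ k = size z - size c)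
  (ex_intro _ _ (ex_intro _ p (conj Hp (conj Hs erefl)))).
subst k.
have Hmax : forall c, Ch c -> size c < size z -> size c <= size c1.
  move=> c Hc Hcz; have := Hmk _ (ex_intro _ c (conj Hc (conj Hcz erefl))); lia.
have HE : EG z c1.
  constructor 3; split=> //; split=> //; split=> //.
have Hp1 := Hmax p Hp Hs.
case: (ltngtP (size p) (size c1)) => Hpc; last first.
- by rewrite (Ch_eq Hp Hc1 Hpc); exact: anc1.
- by move: Hpc Hp1; clear; lia.
- apply: ancS HE (IH c1 _ Hc1 Hp Hpc); move: Hn Hs1 Hpc; clear; lia.
Qed.

Lemma mside_child p : Ch p -> exists y, [/\ EF y p, Ch y \/ (exists b, y = pc b) & prefix (rcons p (ms p)) y].
Proof.
move=> Hp; have [Sp [b Ha]] := Hp.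
have [y [Hy Hd]] := anc_top_dec Ha.
have Cy : Ch y \/ exists b, y = pc b.
  case: Hd => [Ey|Ha']; [right; by exists b | left; split; [exact: (anc_top HF Ha')|by exists b]].
exists y; split=> //.
have [_ C1 _ _ _] := HF; have [_ Hsb _] := C1 _ _ Hy.
case: Cy => [Cy|[b' ->]]; last exact: pc_side.
apply: Ch_side => //; by case/andP: Hsb.
Qed.


Lemma bit_eq (p : seq bool) b b' z : prefix (rcons p b) z -> prefix (rcons p b') z -> b = b'.
Proof. by move=> /rcons_prefixP [_ <-] /rcons_prefixP [_ <-]. Qed.

Lemma EG_m z : EG z m -> exists b, z = pc b.
Proof.
case=> [[b [-> _]]|[_ [Hp _]]|[_ [Hp _]]|[_ [_ [_ Hf]]]]; first by exists b.
- by case: (Ch_ne_m Hp).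
- by case: (Ch_ne_m Hp).
- have [_ C1 _ _ _] := HF; by have [] := C1 _ _ Hf.
Qed.

Lemma EG_ms z p : EG z p -> Ch p -> prefix (rcons p (ms p)) z ->
  (z = m /\ forall c, Ch c -> size c <= size p) \/
  (Ch z /\ size p < size z /\ forall c, Ch c -> size c < size z -> size c <= size p).
Proof.
move=> H Cp Hz; case: H => [[b [_ Ep]]|[Ez [_ Hmax]]|[Hz' [_ [Hs Hmax]]]|[Hnb [Hnm [Hnc Hf]]]].
- by case: (Ch_ne_m Cp).
- by left.
- by right.
- have [y [Hy Cy Hyp]] := mside_child Cp.
  have [_ _ _ _ C3u] := HF; have Ezy := C3u _ _ _ _ Hf Hy Hz Hyp.
  by case: Cy => [Cy|[b Eb]]; [case: Hnc; rewrite Ezy | case: (Hnb b); rewrite Ezy].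
Qed.

Lemma EG_other z p b : EG z p -> Ch p -> prefix (rcons p b) z -> b != ms p -> EF z p.
Proof.
move=> H Cp Hz Hb; case: H => [[b' [_ Ep]]|[Ez _]|[Hz' [_ [Hs _]]]|[_ [_ [_ Hf]]]] //.
- by case: (Ch_ne_m Cp).
- by move: Hb; rewrite (bit_eq Hz (_ : prefix (rcons p (ms p)) z)) ?eqxx // Ez; exact: m_side.
- by move: Hb; rewrite (bit_eq Hz (Ch_side Hz' Cp Hs)) eqxx.
Qed.

Lemma EG_nch z p : EG z p -> SF p -> ~ Ch p -> EF z p.
Proof.
case=> [[b [_ Ep]]|[_ [Hp _]]|[_ [Hp _]]|[_ [_ [_ Hf]]]] //.
- by rewrite Ep.
Qed.

Lemma cfg_G : cfg_ok T SG EG.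
Proof.
have [C0 C1 C2 C3 C3u] := HF.
split.
- by move=> p [/C0 //|->].
- move=> z p [[b [-> ->]]|[-> [Hp _]]|[Hz [Hp [Hs _]]]|[_ [_ [_ Hf]]]].
  + split; [by right | exact: sb_pc | case: (node_pc b) => [H|H]; [left; left|right]] => //.
  + split; [by left; case: Hp | have [P Hs] := Ch_pm Hp; by rewrite /sb P Hs | by left; right].
  + split; [by left; case: Hp | exact: Ch_lt | by left; left; case: Hz].
  + have [Sp Hsb Nz] := C1 _ _ Hf; split; [by left | done | case: Nz => [H|H]; [left; left|right]] => //.
- move=> z p p' H H'.
  case: H => [[b [Ez ->]]|[Ez [Hp Hmax]]|[Hz [Hp [Hs Hmax]]]|[Hnb [Hnm [Hnc Hf]]]].
  + case: H' => [[b' [_ ->]] //|[Ez' _]|[Hz' _]|[Hnb' _]].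
    * by case: (pc_ne_m (b := b)); rewrite -Ez.
    * by case: (Ch_ne_pc Hz' Ez).
    * by case: (Hnb' b).
  + case: H' => [[b' [Ez' _]]|[_ [Hp' Hmax']]|[Hz' _]|[_ [Hnm' _]]].
    * by case: (pc_ne_m (b := b')); rewrite -Ez' Ez.
    * by apply: (Ch_eq Hp Hp'); apply/eqP; rewrite eqn_leq (Hmax _ Hp') (Hmax' _ Hp).
    * by case: (Ch_ne_m Hz').
    * by case: Hnm'.
  + case: H' => [[b' [Ez' _]]|[Ez' _]|[_ [Hp' [Hs' Hmax']]]|[_ [_ [Hnc' _]]]].
    * by case: (Ch_ne_pc Hz Ez').
    * by case: (Ch_ne_m Hz).
    * by apply: (Ch_eq Hp Hp'); apply/eqP; rewrite eqn_leq (Hmax _ Hp' Hs') (Hmax' _ Hp Hs).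
    * by case: Hnc'.
  + case: H' => [[b' [Ez' _]]|[Ez' _]|[Hz' _]|[_ [_ [_ Hf']]]].
    * by case: (Hnb b').
    * by case: Hnm.
    * by case: Hnc.
    * exact: C2 _ _ _ Hf Hf'.
- move=> p b [Sp|->]; last first.
    by exists (pc b); split; [constructor 1; exists b | exact: prefix_refl].
  have [z [Hz Hzp]] := C3 p b Sp.
  case: (classic (Ch p)) => Cp.
    case: (eqVneq b (ms p)) => [->|Hb].
      case: (classic (exists c, Ch c /\ size p < size c)) => [Hex|Hno].
        have [c0 [H0 Hc0 Hs0]] := Ch_next Cp Hex; exists c0; split=> //; exact: Ch_side.
      exists m; split; last exact: m_side.
      constructor 2; do 2 (split=> //); move=> c Hc; rewrite leqNgt; apply/negP => Hlt.
      by apply: Hno; exists c.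
    exists z; split=> //; constructor 4; split; [|split; [|split]] => //.
    * move=> b' Ez; move: Hb; by rewrite (bit_eq Hzp (_ : prefix (rcons p (ms p)) z)) ?eqxx // Ez; exact: pc_side.
    * move=> Ez; move: Hb; by rewrite (bit_eq Hzp (_ : prefix (rcons p (ms p)) z)) ?eqxx // Ez; exact: m_side.
    * move=> Cz; have [_ Hsb _] := C1 _ _ Hz; move: Hb.
      by rewrite (bit_eq Hzp (Ch_side Cz Cp (proj2 (andP Hsb)))) eqxx.
  exists z; split=> //; constructor 4; split; [|split; [|split]] => //.
  * by move=> b' Ez; apply: Cp; apply: (pc_up (b := b')); rewrite -Ez.
  * by move=> Ez; have [_ _ Nz] := C1 _ _ Hz; apply: not_node_m; rewrite -Ez.
  * by move=> Cz; apply: Cp; exact: Ch_up Cz Hz.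
- move=> z z' p b H H' Hz Hz'.
  case: (classic (p = m)) => [Epm|Hpm].
    subst p; have [b1 E1] := EG_m H; have [b2 E2] := EG_m H'; subst z z'.
    by rewrite -(bit_eq Hz (prefix_refl _)) -(bit_eq Hz' (prefix_refl _)).
  have Sp : SF p.
    by case: H => [[b' [_ Ep]]|[_ [[Sp _] _]]|[_ [[Sp _] _]]|[_ [_ [_ Hf]]]] //; have [] := C1 _ _ Hf.
  case: (classic (Ch p)) => Cp; last first.
    exact: C3u _ _ _ _ (EG_nch H Sp Cp) (EG_nch H' Sp Cp) Hz Hz'.
  case: (eqVneq b (ms p)) => [Eb|Hb]; last first.
    exact: C3u _ _ _ _ (EG_other H Cp Hz Hb) (EG_other H' Cp Hz' Hb) Hz Hz'.
  subst b.
  case: (EG_ms H Cp Hz) => [[-> Hmax]|[Cz [Hs Hmax]]];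
    case: (EG_ms H' Cp Hz') => [[-> Hmax']|[Cz' [Hs' Hmax']]] //.
  + by have := Hmax _ Cz'; rewrite leqNgt Hs'.
  + by have := Hmax' _ Cz; rewrite leqNgt Hs.
  + case: (ltngtP (size z) (size z')) => Hzz.
    * by have := Hmax' _ Cz Hzz; rewrite leqNgt Hs.
    * by have := Hmax _ Cz' Hzz; rewrite leqNgt Hs'.
    * exact: Ch_eq Cz Cz' Hzz.
Qed.

Lemma F_le_G z p : EF z p -> anc EG p z.
Proof.
move=> Hf; have [_ C1 _ _ _] := HF; have [Sp Hsb Nz] := C1 _ _ Hf.
case: (classic (exists b, z = pc b)) => [[b Ez]|Hnb].
  subst z; have Cp := pc_up Hf.
  apply: (anc_trans (Ch_ancG Cp)); apply: anc1; constructor 1; by exists b.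
case: (classic (z = m)) => [Ez|Hnm]; first by subst z; case: not_node_m.
case: (classic (Ch z)) => [Cz|Hnc].
  apply: ChChanc Cz (Ch_up Cz Hf) _; by case/andP: Hsb.
apply: anc1; constructor 4; split; [|split; [|split]] => //.
by move=> b Eb; apply: Hnb; exists b.
Qed.


Section Other.
Variables (S' : seq bool -> Prop) (E' : seq bool -> seq bool -> Prop).
Hypothesis H' : cfg_ok T S' E'.
Hypothesis HS' : forall q, S' q <-> SF q \/ q = m.
Hypothesis HE' : forall z p, EF z p -> anc E' p z.

Lemma step1 b : E' (pc b) m.
Proof.
have [C0' C1' C2' C3' C3u'] := H'.
have Sm : S' m by apply/HS'; right.
have [z [Hz Hzp]] := C3' m b Sm.
case: (classic (z = pc b)) => [<-//|Hne].
have Hsb : sb z (pc b) := prefix_neq_sb Hzp Hne.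
have [_ _ Nz] := C1' _ _ Hz.
have [sz Hsz] := node_pos C0' Nz.
have Hszm : size m < size z.
  case/andP: Hsb => _; rewrite /pc size_rcons; lia.
have NzF : node T SF z.
  case: Nz => [/HS' [//|Ezm]|Hl]; [by left | | by right].
  by rewrite Ezm ltnn in Hszm.
have [s Hs] := pc_pos b.
case: s Hs => [i|l r] Hs.
  by case: Hne; apply: (leaf_below Hs _ Hsz); case/andP: Hsb.
have Ip : innerT T (pc b) by rewrite /innerT /is_inner subFT Hs.
have Sp : SF (pc b) := Hmin Ip (sb_pc b).
have Fp : full T SF (pc b).
  move=> q Iq Pq; apply: Hmin Iq _; rewrite /sb (prefix_trans (prefix_rcons m b) Pq) /=.
  by have := size_prefix Pq; rewrite /pc size_rcons.
have [q [Hq Pq]] := full_par HF Sp Fp NzF Hsb.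
have [q' [Hq' Hor]] := anc_first (HE' Hq).
rewrite (C2' _ _ _ Hq' Hz) in Hor.
have Hsq := size_prefix Pq; rewrite /pc size_rcons in Hsq.
case: Hor => [Eq|Ha].
  by move: Hsq; rewrite -Eq ltnn.
have /andP [_ Hs'] := anc_sb H' Ha; by have := ltn_trans Hsq Hs'; rewrite ltnn.
Qed.

Lemma Ch_anc' c : Ch c -> anc E' c m.
Proof.
move=> Cc; have [_ [b Ha]] := Cc.
have Ha' := anc_lift HE' Ha.
have [q' [Hq' Hor]] := anc_first Ha'.
have [_ _ C2' _ _] := H'; rewrite (C2' _ _ _ Hq' (step1 b)) in Hor.
case: Hor => [Ec|//]; by case: (Ch_ne_m Cc).
Qed.

Lemma G_le_G' z p : EG z p -> anc E' p z.
Proof.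
case=> [[b [-> ->]]|[-> [Hp _]]|[Hz [Hp [Hs _]]]|[_ [_ [_ Hf]]]].
- exact: anc1 (step1 b).
- exact: Ch_anc' Hp.
- exact: (anc_chain H' (Ch_anc' Hp) (Ch_anc' Hz) Hs).
- exact: HE' Hf.
Qed.

End Other.

End Main.


Theorem lemma4p2 (I : finType) (T : btree I) (ord : seq (seq bool))
  (F : forest I) (m : seq bool) :
  is_forest [:: T] ->
  nice_order T ord ->
  is_forest F -> flt F [:: T] ->
  (* m = min (V(T) \ V(F)) in the nice order *)
  m \in ord -> ~ inV T F m ->
  (forall v, v \in ord -> ~ inV T F v -> (index m ord <= index v ord)%N) ->
  exists G : forest I,
    [/\ is_forest G, fle G [:: T], fcovers F G,
        (forall v, inV T G v <-> inV T F v \/ v = m) &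
        (forall G' : forest I, is_forest G' -> fle G' [:: T] -> fcovers F G' ->
           (forall v, inV T G' v <-> inV T F v \/ v = m) ->
           fle G G' /\ fle G' G)].
Proof.
move=> HT [Hu [Hord Hnice]] HF [[chi Hchi] HnTF] Hm HmV Hmin.
pose SF := cS T F chi; pose EF := cE T F chi.
have HcF : cfg_ok T SF EF := cfg_forest HT HF Hchi.
have Hmi : innerT T m by rewrite -Hord.
have HmS : ~ SF m by move=> H; apply: HmV; apply/(inV_cS HT m Hchi).
have Hmin' : forall q, innerT T q -> sb q m -> SF q.
  move=> q Iq /andP [Pq Sq]; apply/(inV_cS HT q Hchi); apply: NNPP => Hn.
  have Hq : q \in ord by rewrite Hord.
  have H1 := Hmin q Hq Hn.
  have Hne : q != m by apply/eqP => E; rewrite E ltnn in Sq.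
  have H2 := Hnice q m Hq Hm Pq Hne.
  by move: (leq_trans H2 H1); rewrite ltnn.
have HcG := cfg_G HcF Hmi HmS Hmin'.
have [G [psi [HG HGT HGS HGE]]] := build_ok HT HcG.
have HSG : forall q, cS T G psi q <-> SF q \/ q = m by move=> q; exact: HGS.
have HcGr : cfg_ok T (cS T G psi) (cE T G psi) := cfg_forest HT HG HGT.
have FleG : fle F G.
  apply: (cfg_fle HT HF HG Hchi HGT).
    by move=> q Hq; apply/HSG; left.
  move=> z p Hzp; apply: (anc_ext (E := EG SF EF m)); first by move=> z' p' /HGE.
  exact: (F_le_G HcF Hmi HmS Hzp).
have nGleF : ~ fle G F.
  move=> [a Ha]; have [HS _] := fle_cfg HT HG HF Ha HGT Hchi.
  by apply: HmS; apply: HS; apply/HSG; right.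
exists G; split.
- exact: HG.
- by exists psi.
- split; first by split.
  move=> [H [HH [[FH nHF] [HG' nGH]]]].
  have [chiH HchiH] : fle H [:: T] by apply: (fle_trans HG HG'); exists psi.
  have HcH := cfg_forest HT HH HchiH.
  case: FH => a Ha; have [FS FE] := fle_cfg HT HF HH Ha Hchi HchiH.
  case: (HG') => b Hb; have [HS HE] := fle_cfg HT HH HG Hb HchiH HGT.
  case: (classic (cS T H chiH m)) => Hm'.
    have Heq : forall q, cS T H chiH q <-> cS T G psi q.
      move=> q; split; first exact: HS.
      by move/HSG => [/FS //|->].
    have K := cfg_K HcH HcGr Heq HE.
    apply: nGH; apply: (cfg_fle HT HG HH HGT HchiH).
      by move=> q /Heq.
    by move=> z p /K Hzp; exact: anc1.
  have Heq : forall q, SF q <-> cS T H chiH q.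
    move=> q; split; first exact: FS.
    move=> Hq; have := HS _ Hq; move/HSG => [//|E].
    by rewrite E in Hq.
  have K := cfg_K HcF HcH Heq FE.
  apply: nHF; apply: (cfg_fle HT HH HF HchiH Hchi).
    by move=> q /Heq.
  by move=> z p /K Hzp; exact: anc1.
- move=> v; rewrite (inV_cS HT v HGT) (inV_cS HT v Hchi); exact: HSG.
- move=> G' HG'f [chi' Hchi'] [[FG' _] _] HV'.
  have HcG' := cfg_forest HT HG'f Hchi'.
  have HS' : forall q, cS T G' chi' q <-> SF q \/ q = m.
    by move=> q; rewrite -(inV_cS HT q Hchi') HV' (inV_cS HT q Hchi).
  case: FG' => a Ha; have [_ HE'] := fle_cfg HT HF HG'f Ha Hchi Hchi'.
  have GG' : forall z p, cE T G psi z p -> anc (cE T G' chi') p z.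
    by move=> z p /HGE Hzp; exact: (G_le_G' HcF Hmi HmS Hmin' HcG' HS' HE' Hzp).
  have Heq : forall q, cS T G psi q <-> cS T G' chi' q.
    by move=> q; rewrite HSG HS'.
  split.
    apply: (cfg_fle HT HG HG'f HGT Hchi' _ GG'); by move=> q /Heq.
  have K := cfg_K HcGr HcG' Heq GG'.
  apply: (cfg_fle HT HG'f HG Hchi' HGT); first by move=> q /Heq.
  by move=> z p /K Hzp; exact: anc1.
Qed.
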